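(* Let $\mathbf{y}\in\mathbb{R}^{2s}$ be an arbitrary $s$-sparse vector. Then for all $\mathbf{x}\in\mathbb{R}^{2s}$, \[ \|\mathbf{x}^s-\mathbf{y}\|_2\le\sqrt3\,\|\mathbf{x}-\mathbf{y}\|_2 . \]
   Context: $\mathbf{x}^s$ denotes $\mathbf{x}$ with all but its $s$ largest-magnitude entries set to zero; a vector is $s$-sparse if it has at most $s$ nonzero entries. *)

(* Defs.v *)
From HB Require Import structures.
From mathcomp Require Import all_boot all_order all_algebra.
From mathcomp Require Import reals.
Set Implicit Arguments. Unset Strict Implicit. Unset Printing Implicit Defensive.
Import Order.TTheory GRing.Theory Num.Theory.
Local Open Scope ring_scope.

Section Defs.
Variable R : realType.

Definition l2norm n (v : 'I_n -> R) : R := Num.sqrt (\sum_(i < n) v i ^+ 2).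

Definition sparse n (s : nat) (v : 'I_n -> R) : Prop :=
  (#|[set i | v i != 0%R]| <= s)%N.

Definition top_support n (s : nat) (x : 'I_n -> R) (S : {set 'I_n}) : Prop :=
  #|S| = s /\ forall i j, i \in S -> j \notin S -> `|x j| <= `|x i|.

Definition restrict n (x : 'I_n -> R) (S : {set 'I_n}) : 'I_n -> R :=
  fun i => if i \in S then x i else 0.

(* hard thresholding x^s w.r.t. a given (tie-broken) choice S *)
Definition hard_thr n s (x : 'I_n -> R) (S : {set 'I_n}) (_ : top_support s x S) :=
  restrict x S.

End Defs.

(* Main.v *)
Require Import Defs.
From HB Require Import structures.
From mathcomp Require Import all_boot all_order all_algebra.
From mathcomp Require Import reals.
From mathcomp Require Import ring lra zify.
Import Order.TTheory GRing.Theory Num.Theory.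
Local Open Scope ring_scope.

Lemma sq_mono (R : realType) (a b : R) : `|a| <= `|b| -> a ^+ 2 <= b ^+ 2.
Proof.
move=> h; rewrite -(real_normK (num_real a)) -(real_normK (num_real b)).
have := normr_ge0 a; nra.
Qed.

Lemma sum_compare (R : realType) n (x : 'I_n -> R) (A B : {set 'I_n}) :
  (#|A| <= #|B|)%N -> (forall i j, i \in A -> j \in B -> `|x i| <= `|x j|) ->
  \sum_(i in A) x i ^+ 2 <= \sum_(i in B) x i ^+ 2.
Proof.
move=> hc hx.
have [B0 | [j0 hj0]] := set_0Vmem B.
  rewrite B0 cards0 leqn0 cards_eq0 in hc.
  by rewrite (eqP hc) B0 !big_set0.
case: (arg_minP (fun j => `|x j|) hj0) => j jB jmin.
apply: (@le_trans _ _ (\sum_(i in A) x j ^+ 2)).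
  by apply: ler_sum => i iA; apply: sq_mono; apply: hx.
rewrite sumr_const.
apply: (@le_trans _ _ (x j ^+ 2 *+ #|B|)).
  rewrite -[x j ^+ 2 *+ #|A|]mulr_natr -[x j ^+ 2 *+ #|B|]mulr_natr; apply: ler_wpM2l; [exact: sqr_ge0 | by rewrite ler_nat].
rewrite -sumr_const; apply: ler_sum => i iB; apply: sq_mono; exact: jmin.
Qed.

Theorem proposition5 (R : realType) (s : nat) (y : 'I_(2 * s) -> R)
  (hy : sparse s y) (x : 'I_(2 * s) -> R) (S : {set 'I_(2 * s)})
  (hS : top_support s x S) :
  l2norm (fun i => hard_thr hS i - y i) <= Num.sqrt 3 * l2norm (fun i => x i - y i).
Proof.
rewrite /l2norm -sqrtrM //; apply: ler_wsqrtr.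
rewrite /hard_thr; case: hS => [cS hS] /=.
set T := [set i | y i != 0].
set A := T :\: S. set B := S :\: T.
set d := fun i => (x i - y i) ^+ 2.
have hAB : (#|A| <= #|B|)%N.
  have h1 := cardsID T S. have h2 := cardsID S T.
  rewrite setIC in h1. rewrite /sparse -/T in hy.
  rewrite -/A -/B in h1 h2. 
  by rewrite -(leq_add2l #|T :&: S|) h1 h2 cS.
have c1 : \sum_(i in A) x i ^+ 2 <= \sum_(i in B) x i ^+ 2.
  apply: sum_compare => // i j; rewrite !inE => /andP[iS _] /andP[_ jS].
  exact: hS.
have c2 : \sum_(i in B) x i ^+ 2 = \sum_(i in B) d i.
  apply: eq_bigr => i; rewrite /d !inE negbK => /andP[/eqP -> _].
  by rewrite subr0.
have c3 : \sum_(i in B) d i <= \sum_(i in S) d i.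
  rewrite [X in _ <= X]big_mkcond [X in X <= _]big_mkcond /=.
  apply: ler_sum => i _; rewrite !inE.
  case: (i \in S); case: (y i != 0) => //=; exact: sqr_ge0.
have c4 : \sum_i (restrict x S i - y i) ^+ 2 <=
   \sum_i ((if i \in S then d i else 2 * d i) + 2 * (if i \in A then x i ^+ 2 else 0)).
  apply: ler_sum => i _; rewrite /restrict /d !inE.
  case iS: (i \in S) => /=.
    by rewrite mulr0 addr0.
  case: (eqVneq (y i) 0) => [-> | yi] /=.
    rewrite subrr expr0n /= mulr0 addr0 subr0.
    by apply: mulr_ge0 => //; exact: sqr_ge0.
  rewrite sub0r sqrrN -subr_ge0.
  have -> : 2 * (x i - y i) ^+ 2 + 2 * x i ^+ 2 - y i ^+ 2 = (2 * x i - y i) ^+ 2 by ring.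
  exact: sqr_ge0.
apply: (le_trans c4).
rewrite big_split /= -mulr_sumr -big_mkcond /=.
apply: (@le_trans _ _ (\sum_i (if i \in S then d i else 2 * d i) + 2 * \sum_(i in S) d i)).
  rewrite lerD2l ler_pM2l //; apply: (le_trans c1); rewrite c2; exact: c3.
rewrite [X in _ + 2 * X]big_mkcond mulr_sumr -big_split /= mulr_sumr.
apply: ler_sum => i _; case: (i \in S) => //=.
  rewrite /d; lra.
have := sqr_ge0 (x i - y i); rewrite /d; lra.
Qed.
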